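(* Let $\langle E,\rightarrow\rangle$ be a computation and $b$ a regular predicate. Every consistent cut in $\mathcal{C}_b(E)$ can be expressed as the union of some subset of the set $\mathcal{J}_b(E)=\{J_b(e)\mid e\in E\}$.
   Context: A computation is a directed graph $\langle E, \rightarrow\rangle$ whose vertices (events) are partitioned among processes, each process having an initial event and a final event; $\top$ denotes the set of final events. A subset $C\subseteq E$ is a consistent cut if for every edge $(u,v)$, $v\in C$ implies $u\in C$; $\emptyset$ and $E$ are trivial. A predicate is regular if whenever consistent cuts $C_1,C_2$ satisfy it, so do $C_1\cap C_2$ and $C_1\cup C_2$. $\mathcal{C}_b(E)$ denotes the set of non-trivial consistent cuts satisfying $b$ together with $\emptyset$ and $E$ (treated as satisfying $b$). For an event $e$, $J_b(e)$ is the least consistent cut of $\langle E,\rightarrow\rangle$ that satisfies $b$ and contains $e$; if none exists or $e\in\top$, $J_b(e)=E$. The union of the empty subset is $\emptyset$. *)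

(* Defs.v *)
From mathcomp Require Import all_boot.
Set Implicit Arguments.
Unset Strict Implicit.
Unset Printing Implicit Defensive.

(* A computation <E, ->> : E is a finite set of events, [edge] the directed
   graph, [proc] assigns each event to its (unique) process (this is the
   partition of E among processes), [init p] / [fin p] are the initial and
   final events of process p.  Following the paper's standing conventions
   (Mittal--Garg): the initial event of a process precedes every other event
   of that process, the final event follows every other event of it, all
   initial events lie in one strongly connected component, and so do all
   final events.  "Precedes" is reachability in the graph. *)
Definition computation (E P : finType) (edge : rel E) (proc : E -> P)
    (init fin : P -> E) : Prop :=
  [/\ forall p, proc (init p) = p /\ proc (fin p) = p /\ init p != fin p,
      forall e, connect edge (init (proc e)) e /\ connect edge e (fin (proc e)),
      forall p q, connect edge (init p) (init q) &
      forall p q, connect edge (fin p) (fin q)].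

Definition top_events (E P : finType) (fin : P -> E) : {set E} :=
  [set fin p | p : P].

Definition consistent (E : finType) (edge : rel E) (C : {set E}) : bool :=
  [forall u, forall v, edge u v ==> (v \in C) ==> (u \in C)].

Definition trivial_cut (E : finType) (C : {set E}) : bool :=
  (C == set0) || (C == [set: E]).

(* regular predicate on cuts (predicates are boolean; over a finite event set
   every predicate on cuts is decidable) *)
Definition regular (E : finType) (edge : rel E) (b : pred {set E}) : Prop :=
  forall C1 C2, consistent edge C1 -> consistent edge C2 -> b C1 -> b C2 ->
    b (C1 :&: C2) /\ b (C1 :|: C2).

Definition Cb (E : finType) (edge : rel E) (b : pred {set E}) : {set {set E}} :=
  [set C | (C == set0) || (C == [set: E]) ||
           [&& consistent edge C, ~~ trivial_cut C & b C]].

Definition least_b_cut (E : finType) (edge : rel E) (b : pred {set E})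
    (e : E) (C : {set E}) : bool :=
  [&& consistent edge C, b C, e \in C &
      [forall D, [&& consistent edge D, b D & e \in D] ==> (C \subset D)]].

Definition Jb (E P : finType) (edge : rel E) (fin : P -> E)
    (b : pred {set E}) (e : E) : {set E} :=
  if e \in top_events fin then [set: E]
  else if [pick C | least_b_cut edge b e C] is Some C then C else [set: E].

(* Main.v *)
Require Import Defs.
From mathcomp Require Import all_boot.

Lemma cons_closed (E : finType) (edge : rel E) (C : {set E}) u v :
  consistent edge C -> connect edge u v -> v \in C -> u \in C.
Proof.
move=> cC /connectP [p pth ->].
elim: p u pth => [|w p IH] u //= /andP [euw pth] vin.
have wC := IH w pth vin.
by move: cC => /forallP/(_ u)/forallP/(_ w)/implyP/(_ euw)/implyP/(_ wC).
Qed.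

Lemma cons_I (E : finType) (edge : rel E) (A B : {set E}) :
  consistent edge A -> consistent edge B -> consistent edge (A :&: B).
Proof.
move=> /forallP cA /forallP cB; apply/forallP => u; apply/forallP => v.
apply/implyP => euv; rewrite !inE; apply/implyP => /andP [vA vB].
move: (cA u) (cB u) => /forallP/(_ v)/implyP/(_ euv)/implyP/(_ vA) ->.
by move=> /forallP/(_ v)/implyP/(_ euv)/implyP/(_ vB) ->.
Qed.

Theorem lemma5 (E P : finType) (edge : rel E) (proc : E -> P)
    (init fin : P -> E) (b : pred {set E}) :
  computation edge proc init fin ->
  regular edge b ->
  forall C : {set E}, C \in Cb edge b ->
  exists S : {set {set E}},
    S \subset [set Jb edge fin b e | e : E] /\ C = \bigcup_(X in S) X.
Proof.
move=> [_ Hie _ Hff] reg C; rewrite inE.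
case/orP => [/orP [/eqP -> | /eqP ->] | /and3P [cC ntC bC]].
- exists set0; split; first exact: sub0set.
  by rewrite big_pred0 // => X; rewrite inE.
- case: (pickP (predT : pred E)) => [e _ | none].
  + exists [set [set: E]]; split.
      rewrite sub1set; apply/imsetP; exists (fin (proc e)) => //.
      rewrite /Jb; have -> : fin (proc e) \in top_events fin by rewrite /top_events; apply: imset_f.
      by [].
    by rewrite big_set1.
  + exists set0; split; first exact: sub0set.
    rewrite big_pred0; last by move=> X; rewrite inE.
    by apply/setP => x; have := none x.
- exists [set Jb edge fin b e | e in C]; split.
    apply/subsetP => X /imsetP [e _ ->]; exact: imset_f.
  have notop : forall e, e \in C -> e \notin top_events fin.
    move=> e eC; apply/negP => /imsetP [p _ ep].
    move: ntC; rewrite /trivial_cut negb_or => /andP [_ /negP]; apply.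
    rewrite eqEsubset subsetT /=; apply/subsetP => x _.
    apply: (@cons_closed _ _ _ _ _ cC (proj2 (Hie x))).
    apply: (@cons_closed _ _ _ _ _ cC (Hff _ p)); by rewrite -ep.
  have JC : forall e, e \in C -> e \in Jb edge fin b e /\ Jb edge fin b e \subset C.
    move=> e eC; rewrite /Jb (negbTE (notop e eC)).
    case: pickP => [D | none].
      case/and4P => _ _ eD /forallP /(_ C).
      by rewrite cC bC eC /= => ->.
    exfalso.
    pose Q := fun D : {set E} => [&& consistent edge D, b D & e \in D].
    pose L := C :&: \bigcap_(D | Q D) D.
    have HL : [&& consistent edge L, b L & e \in L].
      rewrite /L; elim/big_rec: _ => [|D X /and3P [cD bD eD] /and3P [cX bX eX]].
        by rewrite setIT cC bC eC.
      have -> : C :&: (D :&: X) = D :&: (C :&: X) by rewrite setIA [C :&: D]setIC -setIA.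
      have [bI _] := reg _ _ cD cX bD bX.
      by rewrite cons_I // bI inE eD eX.
    have := none L; rewrite /least_b_cut.
    case/and3P: HL => -> -> -> /=; move/negbT/negP; apply.
    apply/forallP => D; apply/implyP => QD.
    apply: subIset; apply/orP; right; exact: bigcap_inf.
  apply/setP => x; apply/idP/idP.
    move=> xC; apply/bigcupP; exists (Jb edge fin b x); first exact: imset_f.
    exact: (JC x xC).1.
  case/bigcupP => X /imsetP [e eC ->] xX.
  exact: (subsetP (JC e eC).2).
Qed.
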